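(* For every integer $k\ge0$, the following identity of rational functions in $x$ and $q$ holds: \[ \tilde\sigma_{-k-1}=(1-x^{-1})\sum_{j=-k}^{k}\frac{R_{k,j}}{x+x^{-1}-q^j-q^{-j}},\qquad R_{k,j}=-\frac{(-1)^{k+j}q^{\binom{j+1}{2}+\binom{k+1}{2}}}{(q;q)_{k-j}(q;q)_{k+j}}, \] where $\tilde\sigma_{-k-1}=\frac{(-1)^kq^{\binom{k+1}{2}}}{(x;q)_{k+1}(qx^{-1};q)_k}$ and $\binom{j+1}{2}=\frac{j(j+1)}{2}$ for all $j\in\mathbb{Z}$.
   Context: $(a;q)_n=\prod_{j=0}^{n-1}(1-aq^j)$. The quantity $R_{k,j}$ is the residue of $\tilde\sigma_{-k-1}(x)\,dx$ at $x=q^j$. *)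

(* Defs.v *)
From mathcomp Require Import all_boot all_order all_algebra.
Set Implicit Arguments. Unset Strict Implicit. Unset Printing Implicit Defensive.
Import Order.TTheory GRing.Theory Num.Theory.
Local Open Scope ring_scope.

Definition qpoch (F : fieldType) (a q : F) (n : nat) : F :=
  \prod_(j < n) (1 - a * q ^+ j).

(* binom(j+1, 2) = j(j+1)/2 for all integers j (always an integer). *)
Definition tri (j : int) : int := ((j * (j + 1)) %/ 2)%Z.

Definition tsigma (F : fieldType) (k : nat) (x q : F) : F :=
  (-1) ^+ k * q ^ tri k%:Z / (qpoch x q k.+1 * qpoch (q / x) q k).

(* R_{k,j} = - (-1)^{k+j} q^{binom(j+1,2)+binom(k+1,2)} / ((q;q)_{k-j} (q;q)_{k+j}),
   for -k <= j <= k (so k-j, k+j >= 0, taken as naturals via absz). *)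
Definition Rkj (F : fieldType) (k : nat) (j : int) (q : F) : F :=
  - ((-1) ^ (k%:Z + j) * q ^ (tri j + tri k%:Z)
     / (qpoch q q (absz (k%:Z - j)) * qpoch q q (absz (k%:Z + j)))).

(* Main.v *)
Require Import Defs.
From mathcomp Require Import all_boot all_order all_algebra.
From mathcomp Require Import zify ring.
Import Order.TTheory GRing.Theory Num.Theory.
Set Implicit Arguments. Unset Strict Implicit. Unset Printing Implicit Defensive.
Local Open Scope ring_scope.

Lemma triS (j : int) : tri (j + 1) = tri j + (j + 1).
Proof.
rewrite /tri.
have -> : (j + 1) * (j + 1 + 1) = (j + 1) * 2 + j * (j + 1) by ring.
by rewrite divzMDl // addrC.
Qed.

Lemma tri0 : tri 0 = 0. Proof. by []. Qed.

Lemma triN (j : int) : tri (- j) = tri j - j.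
Proof.
have -> : tri (- j) = tri (j - 1).
  by rewrite /tri; congr (_ %/ _)%Z; ring.
have := triS (j - 1); rewrite subrK => ->; ring.
Qed.

Definition qt (F : fieldType) (q : F) (m : nat) := q ^ tri (Posz m).

Lemma qtS (F : fieldType) (q : F) m : q != 0 -> qt q m.+1 = qt q m * q ^+ m.+1.
Proof.
move=> hq; rewrite /qt -addn1 PoszD triS expfzDr // -PoszD addn1 //.
Qed.

Lemma qt0 (F : fieldType) (q : F) : qt q 0 = 1. Proof. by []. Qed.

Lemma qt_neq0 (F : fieldType) (q : F) m : q != 0 -> qt q m != 0.
Proof. by move=> hq; apply: expfz_neq0. Qed.

Lemma qt_sq (F : fieldType) (q : F) m : q != 0 -> qt q m * qt q m = q ^+ (m * m + m).
Proof.
move=> hq; elim: m => [|m IH]; first by rewrite qt0 mulr1.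
rewrite qtS // mulrACA IH -!exprD; congr (_ ^+ _); lia.
Qed.

Lemma lagrange (F : fieldType) (n : nat) (d : nat -> F) (y : F) : (0 < n)%N ->
  (forall i j : 'I_n, i != j -> d i != d j) ->
  (forall i : 'I_n, y != d i) ->
  (\prod_(i < n) (y - d i))^-1 =
  \sum_(i < n) (\prod_(j < n | j != i) (d i - d j))^-1 / (y - d i).
Proof.
move=> n0 hd hy.
set w := fun i : 'I_n => (\prod_(j < n | j != i) (d i - d j))^-1.
have wE : forall i : 'I_n, w i * \prod_(j < n | j != i) (d i - d j) = 1.
  move=> i; rewrite mulVf //; apply/prodf_neq0 => j ji.
  by rewrite subr_eq0 eq_sym hd.
pose p : {poly F} :=
  \sum_(i < n) w i *: \prod_(j < n | j != i) ('X - (d j)%:P) - 1.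
have p0 : p = 0.
  apply/eqP; apply: contraT => pn0.
  have := max_poly_roots pn0 (rs := [seq d (nat_of_ord i) | i <- enum 'I_n]).
  have -> : all (root p) [seq d (nat_of_ord i) | i <- enum 'I_n].
    apply/allP => _ /mapP [i _ ->].
    rewrite /root /p hornerD hornerN hornerC horner_sum (bigD1 i) //=.
    rewrite [X in _ + X - _]big1 => [|l li].
      by rewrite addr0 hornerZ horner_prod; under eq_bigr do rewrite hornerXsubC; rewrite wE subrr.
    rewrite hornerZ horner_prod (bigD1 i) 1?eq_sym //= hornerXsubC.
    by rewrite subrr mul0r mulr0.
  have -> : uniq [seq d (nat_of_ord i) | i <- enum 'I_n].
    rewrite map_inj_uniq ?enum_uniq // => i j dij.
    by apply/eqP; apply: contraT => /hd; rewrite dij eqxx.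
  rewrite size_map size_enum_ord => /(_ isT isT).
  suff szp : (size p <= n)%N by rewrite ltnNge szp.
  have sz : forall i : 'I_n, (size (\prod_(j < n | j != i) ('X - (d j)%:P))%R <= n)%N.
    move=> i; rewrite size_prod; last by move=> j _; rewrite polyXsubC_eq0.
    under eq_bigr do rewrite size_XsubC.
    rewrite sum_nat_const.
    have -> : #|[pred j : 'I_n | j != i]| = n.-1 by rewrite -[in RHS](card_ord n) -(cardC1 i).
    rewrite -[2%R]/2%N; lia.
  rewrite /p; apply: leq_trans (size_polyD _ _) _.
  rewrite size_polyN size_polyC oner_neq0 geq_max; apply/andP; split; last first.
    by [].
  apply: (big_ind (fun r : {poly F} => (size r <= n)%N)) => //.
  - by rewrite size_poly0.
  - by move=> a b ha hb; apply: leq_trans (size_polyD _ _) _; rewrite geq_max ha hb.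
  - by move=> i _; apply: leq_trans (size_scale_leq _ _) (sz i).
have key : \sum_(i < n) w i * \prod_(j < n | j != i) (y - d j) = 1.
  have := congr1 (fun r => r.[y]) p0.
  rewrite /p hornerD hornerN hornerC horner0 horner_sum => /eqP; rewrite subr_eq0 => /eqP H; rewrite -[RHS]H.
  apply: eq_bigr => i _; rewrite hornerZ horner_prod.
  by congr (_ * _); apply: eq_bigr => j _; rewrite hornerXsubC.
have Pn0 : \prod_(i < n) (y - d i) != 0.
  by apply/prodf_neq0 => i _; rewrite subr_eq0.
transitivity ((\sum_(i < n) w i * \prod_(j < n | j != i) (y - d j)) * (\prod_(i < n) (y - d i))^-1); first by rewrite key mul1r.
rewrite mulr_suml; apply: eq_bigr => i _.
rewrite [X in _ / X](bigD1 i) //=.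
have Qn0 : \prod_(j < n | j != i) (y - d j) != 0.
  by apply/prodf_neq0 => j _; rewrite subr_eq0.
have yn0 : y - d i != 0 by rewrite subr_eq0.
rewrite /w; field; rewrite yn0 Qn0 andbT; apply/prodf_neq0 => j ji; by rewrite subr_eq0 eq_sym hd.
Qed.

Definition cn (F : fieldType) (q : F) (m : nat) := q ^+ m + q ^- m.
Definition Gf (F : fieldType) (q : F) (K m : nat) :=
  \prod_(l < K.+1 | (l : nat) != m) (cn q m - cn q l).

Lemma pqS (F : fieldType) (q : F) n : qpoch q q n.+1 = qpoch q q n * (1 - q ^+ n.+1).
Proof. by rewrite /qpoch big_ord_recr /= exprS. Qed.

Lemma pq_add (F : fieldType) (q : F) a b :
  qpoch q q (a + b) = qpoch q q a * \prod_(i < b) (1 - q ^+ (a + i).+1).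
Proof.
rewrite /qpoch big_split_ord /=; congr (_ * _); apply: eq_bigr => i _.
by rewrite exprS.
Qed.

Lemma GfS (F : fieldType) (q : F) K m : (m <= K)%N ->
  Gf q K.+1 m = Gf q K m * (cn q m - cn q K.+1).
Proof.
move=> mK; rewrite /Gf big_mkcond big_ord_recr /= -big_mkcond /=.
have -> : (K.+1 != m) by apply/eqP => e; move: mK; rewrite -e ltnn.
done.
Qed.

Lemma GfB (F : fieldType) (q : F) m :
  Gf q m m = \prod_(l < m) (cn q m - cn q l).
Proof.
rewrite /Gf big_mkcond big_ord_recr /= eqxx mulr1; apply: eq_bigr => i _.
by rewrite neq_ltn ltn_ord.
Qed.

Lemma cn_lt (F : fieldType) (q : F) l m : q != 0 -> (l <= m)%N ->
  cn q m - cn q l = q ^- m * (1 - q ^+ (m - l)) * (1 - q ^+ (m + l)).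
Proof.
move=> hq lm; rewrite /cn.
have -> : m = (l + (m - l))%N by rewrite subnKC.
rewrite addKn !exprD; set a := q ^+ l; set b := q ^+ (m - l).
have an0 : a != 0 by rewrite expf_neq0.
have bn0 : b != 0 by rewrite expf_neq0.
field; by rewrite an0 bn0.
Qed.

Lemma cn_gt (F : fieldType) (q : F) m K : q != 0 -> (m <= K)%N ->
  (cn q m - cn q K) * (- q ^+ K) = (1 - q ^+ (K - m)) * (1 - q ^+ (K + m)).
Proof.
move=> hq lm; rewrite /cn.
have -> : K = (m + (K - m))%N by rewrite subnKC.
rewrite addKn !exprD; set a := q ^+ m; set b := q ^+ (K - m).
have an0 : a != 0 by rewrite expf_neq0.
have bn0 : b != 0 by rewrite expf_neq0.
field; by rewrite an0 bn0.
Qed.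

Lemma Gf_step (F : fieldType) (q : F) m n : q != 0 ->
  Gf q (m + n) m * ((-1) ^+ n * qt q (m + n)) =
  qt q m * Gf q m m * qpoch q q n * \prod_(i < n) (1 - q ^+ (m + m + i).+1).
Proof.
move=> hq; elim: n => [|n IH].
  by rewrite addn0 big_ord0 expr0 mul1r /qpoch big_ord0 !mulr1 mulrC.
rewrite addnS GfS ?leq_addr // qtS // pqS big_ord_recr /=.
have h := cn_gt hq (leq_addr n.+1 m); rewrite addnS in h.
transitivity ((Gf q (m+n) m * ((-1)^+n * qt q (m+n))) *
   ((cn q m - cn q (m+n).+1) * (- q^+(m+n).+1))).
  rewrite exprS; ring.
rewrite IH h.
have -> : ((m + n).+1 - m = n.+1)%N by lia.
have -> : ((m + n).+1 + m = (m + m + n).+1)%N by lia.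
ring.
Qed.

Lemma Gf_base (F : fieldType) (q : F) s : q != 0 ->
  Gf q s.+1 s.+1 * (qt q s.+1 * qt q s.+1 * (1 + q ^- s.+1)) =
  qpoch q q (s.+1 + s.+1).
Proof.
move=> hq; set m := s.+1.
rewrite GfB qt_sq // pq_add.
under eq_bigr => l _ do rewrite (cn_lt hq (ltnW (ltn_ord l))).
rewrite !big_split /= prodr_const card_ord.
have -> : \prod_(i < m) (1 - q ^+ (m - i)) = qpoch q q m.
  rewrite (reindex_inj rev_ord_inj) /=; apply: eq_bigr => i _.
  by rewrite subKn ?ltn_ord // exprS.
have B1 : \prod_(i < m) (1 - q ^+ (m + i)) =
          (1 - q ^+ m) * \prod_(i < s) (1 - q ^+ (m + i).+1).
  by rewrite big_ord_recl /= addn0; congr (_ * _); apply: eq_bigr => i _; rewrite addnS.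
have B2 : \prod_(i < m) (1 - q ^+ (m + i).+1) =
          \prod_(i < s) (1 - q ^+ (m + i).+1) * (1 - q ^+ m ^+ 2).
  by rewrite big_ord_recr /= -exprM; congr (_ * (1 - q ^+ _)); lia.
rewrite B1 B2; set P := \prod_(i < s) _; set Q := q ^+ m.
have Qn0 : Q != 0 by rewrite expf_neq0.
rewrite exprD exprM -/Q.
rewrite exprVn -/Q; set R := Q ^+ m.
have Rn0 : R != 0 by rewrite expf_neq0.
rewrite -/Q -/R.
field; by rewrite Qn0 Rn0.
Qed.

Lemma inv_eq (F : fieldType) (a b c : F) : a * b = c -> c != 0 -> a^-1 = b / c.
Proof.
move=> <- h; have an0 : a != 0 by apply: contraNneq h => ->; rewrite mul0r.
have bn0 : b != 0 by apply: contraNneq h => ->; rewrite mulr0.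
field; by rewrite an0 bn0.
Qed.

Lemma Gf0 (F : fieldType) (q : F) : Gf q 0 0 = 1.
Proof. by rewrite GfB big_ord0. Qed.

Lemma W0 (F : fieldType) (q : F) k : q != 0 -> qpoch q q k != 0 ->
  (Gf q k 0)^-1 = - Rkj k 0 q.
Proof.
move=> hq hk.
have := @Gf_step F q 0 k hq; rewrite !add0n Gf0 qt0 !mul1r.
under eq_bigr do rewrite add0n.
have -> : \prod_(i < k) (1 - q ^+ i.+1) = qpoch q q k.
  by apply: eq_bigr => i _; rewrite exprS.
move=> /inv_eq -> ; last by rewrite mulf_neq0.
rewrite /Rkj opprK.
rewrite tri0 add0r (_ : Posz k - 0 = Posz k) ?subr0 // (_ : Posz k + 0 = Posz k) ?addr0 //.
Qed.

Lemma Wm (F : fieldType) (q : F) s n : q != 0 ->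
  qpoch q q n != 0 -> qpoch q q (s.+1 + s.+1 + n) != 0 ->
  (Gf q (s.+1 + n) s.+1)^-1 =
  - (Rkj (s.+1 + n) (Posz s.+1) q + Rkj (s.+1 + n) (- Posz s.+1) q).
Proof.
move=> hq hn h2; set m := s.+1.
have st := @Gf_step F q m n hq.
have bs := @Gf_base F q s hq.
have pa := @pq_add F q (m + m) n.
have key : Gf q (m + n) m * ((-1) ^+ n * (qt q m * qt q (m + n)) * (1 + q ^- m)) =
           qpoch q q n * qpoch q q (m + m + n).
  transitivity ((Gf q (m + n) m * ((-1) ^+ n * qt q (m + n))) * (qt q m * (1 + q ^- m))).
    by ring.
  rewrite st pa -bs; ring.
rewrite (inv_eq key) ?mulf_neq0 //.
rewrite /Rkj.
rewrite (_ : Posz (m + n) - Posz m = Posz n); last by lia.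
rewrite (_ : Posz (m + n) + Posz m = Posz (m + m + n)); last by lia.
rewrite triN !expfzDr // -exprnN.
have -> : (-1) ^ Posz (m + m + n) = (-1) ^+ n :> F.
  change ((-1) ^+ (m + m + n) = (-1) ^+ n :> F); rewrite !exprD -exprMn mulrNN mulr1 expr1n mul1r //.
rewrite /=.
rewrite /qt.
set A := q ^ tri (Posz m); set B := q ^ tri (Posz (m + n)).
have -> : (-1) ^ Posz n = (-1) ^+ n :> F by [].
set C := (-1) ^+ n; set Qm := q ^+ m.
have Qn0 : Qm != 0 by rewrite expf_neq0.
field; by rewrite Qn0 hn h2.
Qed.

Lemma qpS (F : fieldType) (a q : F) n : qpoch a q n.+1 = qpoch a q n * (1 - a * q ^+ n).
Proof. by rewrite /qpoch big_ord_recr. Qed.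

Lemma den (F : fieldType) (k : nat) (x q : F) : x != 0 -> q != 0 ->
  qpoch x q k.+1 * qpoch (q / x) q k =
  (1 - x) * ((-1) ^+ k * qt q k) * \prod_(m < k) (x + x^-1 - cn q m.+1).
Proof.
move=> hx hq; elim: k => [|k IH].
  by rewrite /qpoch big_ord1 !big_ord0 !expr0 qt0 !mulr1.
rewrite qpS [qpoch (q / x) q k.+1]qpS.
transitivity ((qpoch x q k.+1 * qpoch (q / x) q k) *
   ((1 - x * q ^+ k.+1) * (1 - q / x * q ^+ k))); first by ring.
rewrite IH qtS // big_ord_recr /=.
rewrite /cn !exprS; set t := q ^+ k.
have tn0 : t != 0 by rewrite expf_neq0.
set P := \prod_(i < k) _; set C := (-1) ^+ k; set T := qt q k.
field; by rewrite hx hq tn0.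
Qed.

Lemma tsigmaE (F : fieldType) (k : nat) (x q : F) : x != 0 -> q != 0 ->
  qpoch x q k.+1 != 0 ->
  (forall m, (m <= k)%N -> x + x^-1 - cn q m != 0) ->
  tsigma k x q = - (1 - x^-1) * (\prod_(m < k.+1) (x + x^-1 - cn q m))^-1.
Proof.
move=> hx hq h1 hy.
have x1 : 1 - x != 0.
  by move: h1; rewrite /qpoch big_ord_recl mulf_eq0 negb_or expr0 mulr1 => /andP[].
rewrite /tsigma den // big_ord_recl /=.
have -> : q ^ tri (Posz k) = qt q k by [].
set P := \prod_(i < k) _; set C := (-1) ^+ k; set T := qt q k.
have Pn0 : P != 0 by apply/prodf_neq0 => i _; apply: hy.
have Cn0 : C != 0 by rewrite expf_neq0 // oppr_eq0 oner_eq0.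
have Tn0 : T != 0 by apply: qt_neq0.
have y0 := hy 0%N (leq0n k).
rewrite /cn expr0 invr1 in y0 *.
have y0' : x * (x + x^-1 - (1 + 1)) != 0 by rewrite mulf_neq0.
field; rewrite hx x1 Pn0 Cn0 Tn0 /= !andbT.
by apply: (contra_neq _ y0') => H; rewrite -H; field.
Qed.

Lemma reidx (F : fieldType) (k : nat) (g : int -> F) :
  \sum_(i < (2 * k).+1) g (i%:Z - k%:Z) =
  g 0 + \sum_(m < k) (g (Posz m.+1) + g (- Posz m.+1)).
Proof.
change (2 * k)%R with (2 * k)%N.
rewrite -(big_mkord xpredT (fun i => g (Posz i - Posz k))).
rewrite (big_cat_nat _ (n := k)) //=; last by lia.
rewrite (@big_ltn _ _ _ k) /=; last by lia.
rewrite subrr big_nat_rev /= -{1}(add0n k.+1) big_addn.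
have -> : ((2 * k).+1 - k.+1 = k)%N by lia.
rewrite !big_mkord big_split /= addrCA [X in _ = _ + X]addrC.
congr (_ + (_ + _)).
  by apply: eq_bigr => i _; congr g; have := ltn_ord i; lia.
by apply: eq_bigr => i _; congr g; lia.
Qed.

Theorem lemma5p3 (F : fieldType) (k : nat) (x q : F)
  (hx : x != 0) (hq : q != 0)
  (h1 : qpoch x q k.+1 != 0) (h2 : qpoch (q / x) q k != 0)
  (h3 : forall n : nat, (n <= 2 * k)%N -> qpoch q q n != 0)
  (h4 : forall j : int, - (k%:Z) <= j <= k%:Z ->
          x + x^-1 - q ^ j - q ^ (- j) != 0) :
  tsigma k x q =
  (1 - x^-1) * \sum_(i < (2 * k).+1)
     Rkj k (i%:Z - k%:Z) q
       / (x + x^-1 - q ^ (i%:Z - k%:Z) - q ^ (- (i%:Z - k%:Z))).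
Proof.
have denE : forall m : nat, x + x^-1 - q ^ (Posz m) - q ^ (- Posz m) = x + x^-1 - cn q m.
  move=> m; rewrite -exprnN /cn (_ : q ^ Posz m = q ^+ m) //; ring.
have denE' : forall m : nat, x + x^-1 - q ^ (- Posz m) - q ^ (- - Posz m) = x + x^-1 - cn q m.
  move=> m; rewrite opprK -exprnN /cn (_ : q ^ Posz m = q ^+ m) //; ring.
have hy : forall m, (m <= k)%N -> x + x^-1 - cn q m != 0.
  move=> m mk; rewrite -denE; apply: h4; apply/andP; split; lia.
have hone : forall t, (1 <= t)%N -> (t <= 2 * k)%N -> 1 - q ^+ t != 0.
  by move=> [|t] // _ t2; have := h3 _ t2; rewrite pqS mulf_eq0 negb_or => /andP[_ ->].
have dist : forall i j : 'I_k.+1, i != j -> cn q i != cn q j.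
  move=> i j; case: (ltngtP i j) => [ij|ji|e] neq.
  - rewrite eq_sym -subr_eq0 cn_lt // ?(ltnW ij) // !mulf_neq0 //.
    + by rewrite invr_neq0 // expf_neq0.
    + apply: hone; have := ltn_ord j; lia.
    + apply: hone; have := ltn_ord j; lia.
  - rewrite -subr_eq0 cn_lt // ?(ltnW ji) // !mulf_neq0 //.
    + by rewrite invr_neq0 // expf_neq0.
    + apply: hone; have := ltn_ord i; lia.
    + apply: hone; have := ltn_ord i; lia.
  - by move: neq; rewrite (val_inj e) eqxx.
rewrite (tsigmaE hx hq h1 hy) (@lagrange F k.+1 (cn q) (x + x^-1)) //; first last.
- by move=> i; rewrite -subr_eq0; apply: hy; rewrite -ltnS.
rewrite (reidx k (fun j => Rkj k j q / (x + x^-1 - q ^ j - q ^ (- j)))) big_ord_recl /=.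
have E0 : (\prod_(j < k.+1 | j != ord0) (cn q 0 - cn q j))^-1 = - Rkj k 0 q.
  rewrite -(W0 hq (h3 k _)); last by lia.
  by rewrite /Gf.
have Em : forall i : 'I_k,
   (\prod_(j < k.+1 | j != lift ord0 i) (cn q (bump 0 i) - cn q j))^-1 =
   - (Rkj k (Posz i.+1) q + Rkj k (- Posz i.+1) q).
  move=> i; have ik := ltn_ord i.
  have := @Wm F q i (k - i.+1) hq (h3 _ _) (h3 _ _); rewrite subnKC // => <-; try lia.
  by rewrite /Gf.
have S : \sum_(i < k)
      (\prod_(j < k.+1 | j != lift ord0 i) (cn q (bump 0 i) - cn q j))^-1 /
      (x + x^-1 - cn q (bump 0 i)) =
   - \sum_(m < k)
      (Rkj k (Posz m.+1) q / (x + x^-1 - q ^ (Posz m.+1) - q ^ (- Posz m.+1)) +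
       Rkj k (- Posz m.+1) q / (x + x^-1 - q ^ (- Posz m.+1) - q ^ (- - Posz m.+1))).
  rewrite -sumrN; apply: eq_bigr => i _; rewrite Em denE denE'.
  by rewrite -mulrDl mulNr.
rewrite S E0.
rewrite /cn expr0z expr0 invr1 (_ : x + x^-1 - (1 + 1) = x + x^-1 - 1 - 1); last by rewrite opprD addrA.
set S1 := \sum_(m < k) _; set D := x + x^-1 - 1 - 1.
ring.
Qed.
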